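(* Let $\alpha\in(1,2)$ and let $p\ge2$ be an even integer (so $p>\alpha$). Set $a:=\left(\pi^4/48\right)^{1/\alpha}$. Then $$f^{p,0}(\theta)\le f^{p,\alpha}(\theta)\qquad\text{for all }\theta\text{ with }|\theta|\in[a,\pi].$$
   Context: For real $\beta\ge0$ and integer $p\ge 2$, $f^{p,\beta}(\theta)=\sum_{l\in\mathbb Z}|\theta+2l\pi|^{\beta}\left(\frac{\sin(\theta/2+l\pi)}{\theta/2+l\pi}\right)^{p+1}$ (with $\frac{\sin x}{x}:=1$ at $x=0$ and $|x|^0:=1$). *)

(* Defs.v *)
From Stdlib Require Import Reals ZArith.
From Coquelicot Require Import Coquelicot.
Open Scope R_scope.

Definition sinc (x : R) : R := if Req_EM_T x 0 then 1 else sin x / x.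

(* |x|^beta for real beta >= 0, with the convention |x|^0 := 1 (also at x = 0)
   and 0^beta = 0 for beta > 0. *)
Definition abspow (x beta : R) : R :=
  if Req_EM_T beta 0 then 1
  else if Req_EM_T x 0 then 0 else Rpower (Rabs x) beta.

Definition fterm (p : nat) (beta theta : R) (l : Z) : R :=
  abspow (theta + 2 * IZR l * PI) beta * (sinc (theta / 2 + IZR l * PI)) ^ (p + 1).

(* f^{p,beta}(theta) = sum_{l in Z} fterm l, written as the series over n : nat
   of the paired terms l = n and l = -(n+1). *)
Definition fpb (p : nat) (beta theta : R) : R :=
  Series (fun n : nat => fterm p beta theta (Z.of_nat n)
                         + fterm p beta theta (- (Z.of_nat n + 1))%Z).

(* Main.v *)
Require Import Defs.
From Stdlib Require Import Reals ZArith Arith Lra Lia.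
From Coquelicot Require Import Coquelicot.
Open Scope R_scope.

Lemma PI_gt3 : 3 < PI.
Proof. generalize PI2_3_2; lra. Qed.

Definition A (q : nat) (b t : R) : R := Rpower (2 * t) b / t ^ q.

Lemma abspow_pos z b : 0 < z -> abspow z b = Rpower z b.
Proof.
  intros Hz; unfold abspow.
  destruct (Req_EM_T b 0) as [e|ne].
  - subst; rewrite Rpower_O; auto.
  - destruct (Req_EM_T z 0); [lra|]. rewrite Rabs_pos_eq; lra.
Qed.

Lemma abspow_opp z b : abspow (- z) b = abspow z b.
Proof.
  unfold abspow.
  destruct (Req_EM_T b 0); auto.
  destruct (Req_EM_T (-z) 0); destruct (Req_EM_T z 0); try lra.
  rewrite Rabs_Ropp; auto.
Qed.

Lemma sinc_opp z : sinc (- z) = sinc z.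
Proof.
  unfold sinc.
  destruct (Req_EM_T (-z) 0); destruct (Req_EM_T z 0); try lra.
  rewrite sin_neg. field. auto.
Qed.

Lemma sin_shift n x : sin (x + INR n * PI) = (-1) ^ n * sin x.
Proof.
  induction n.
  - simpl. rewrite Rmult_0_l, Rplus_0_r. ring.
  - rewrite S_INR. replace (x + (INR n + 1) * PI) with ((x + INR n * PI) + PI) by ring.
    rewrite neg_sin, IHn. simpl. ring.
Qed.

Lemma sin_shift_neg n x : sin (x - (INR n + 1) * PI) = - ((-1) ^ n * sin x).
Proof.
  pose proof (sin_shift (S n) (x - (INR n + 1) * PI)) as H.
  rewrite S_INR in H. replace (x - (INR n + 1) * PI + (INR n + 1) * PI) with x in H by ring.
  assert (E : (-1) ^ n * (-1) ^ n = 1).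
  { rewrite <- Rpow_mult_distr. replace (-1 * -1) with 1 by ring. apply pow1. }
  simpl in H. rewrite H.
  replace (- ((-1) ^ n * (-1 * (-1) ^ n * sin (x - (INR n + 1) * PI))))
    with ((-1) ^ n * (-1) ^ n * sin (x - (INR n + 1) * PI)) by ring.
  rewrite E; ring.
Qed.

Lemma pow_odd_sign q n y : (-1) ^ q = -1 -> ((-1) ^ n * y) ^ q = (-1) ^ n * y ^ q.
Proof.
  intros Hq. rewrite Rpow_mult_distr. f_equal.
  rewrite <- pow_mult, Nat.mul_comm, pow_mult, Hq. auto.
Qed.

Lemma fterm_pos p b th n :
  0 < th / 2 + INR n * PI -> (-1) ^ (p + 1) = -1 ->
  fterm p b th (Z.of_nat n) = (-1) ^ n * ((sin (th / 2)) ^ (p + 1) * A (p + 1) b (th / 2 + INR n * PI)).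
Proof.
  intros Ht Hq. unfold fterm, A. rewrite <- INR_IZR_INZ.
  set (t := th / 2 + INR n * PI) in *.
  replace (th + 2 * INR n * PI) with (2 * t) by (unfold t; field).
  rewrite abspow_pos by lra.
  assert (Hs : sinc t = (-1) ^ n * sin (th / 2) * / t).
  { unfold sinc. destruct (Req_EM_T t 0); [lra|]. unfold t. rewrite sin_shift. unfold Rdiv. auto. }
  rewrite Hs. rewrite Rpow_mult_distr, pow_odd_sign by auto. rewrite pow_inv. unfold Rdiv. ring.
Qed.

Lemma fterm_neg p b th n :
  0 < (INR n + 1) * PI - th / 2 -> (-1) ^ (p + 1) = -1 ->
  fterm p b th (- (Z.of_nat n + 1))%Z =
  (-1) ^ n * ((sin (th / 2)) ^ (p + 1) * A (p + 1) b ((INR n + 1) * PI - th / 2)).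
Proof.
  intros Ht Hq. unfold fterm, A.
  rewrite opp_IZR, plus_IZR, <- INR_IZR_INZ.
  set (t := (INR n + 1) * PI - th / 2) in *.
  replace (th + 2 * - (INR n + 1) * PI) with (- (2 * t)) by (unfold t; field).
  rewrite abspow_opp, abspow_pos by lra.
  assert (Hs : sinc (th / 2 + - (INR n + 1) * PI) = (-1) ^ n * sin (th / 2) * / t).
  { unfold sinc. destruct (Req_EM_T _ 0) as [e|ne]; [unfold t in *; lra|].
    replace (th / 2 + - (INR n + 1) * PI) with (th / 2 - (INR n + 1) * PI) by ring.
    rewrite sin_shift_neg. unfold t. field. unfold t in ne. lra. }
  rewrite Hs. rewrite Rpow_mult_distr, pow_odd_sign by auto. rewrite pow_inv. unfold Rdiv. ring.
Qed.
Lemma Rpower_pos x y : 0 < Rpower x y.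
Proof. unfold Rpower. apply exp_pos. Qed.

Lemma A_nonneg q b t : 0 < t -> 0 <= A q b t.
Proof.
  intros Ht. unfold A. apply Rle_mult_inv_pos. left; apply Rpower_pos. apply pow_lt; auto.
Qed.

Lemma A_zero q t : 0 < t -> A q 0 t = 1 / t ^ q.
Proof. intros; unfold A. rewrite Rpower_O; auto; lra. Qed.

Lemma A_scale q b t r : 0 < t -> 0 < r ->
  A q b (t * r) = Rpower (2 * t) b * Rpower r b / (t ^ q * r ^ q).
Proof.
  intros Ht Hr. unfold A. rewrite Rpow_mult_distr, Rpower_mult_distr by lra.
  f_equal. f_equal. ring.
Qed.

Lemma Rpower_le_sq r b : 1 <= r -> b <= 2 -> Rpower r b <= r ^ 2.
Proof.
  intros. rewrite <- Rpower_pow by lra. apply Rle_Rpower; auto; simpl; lra.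
Qed.

Lemma div_helper a b c D : 0 < D -> 0 < c -> a <= b * c -> a / (D * c) <= b / D.
Proof.
  intros HD Hc H. unfold Rdiv. rewrite Rinv_mult.
  apply Rmult_le_reg_r with (D * c). nra.
  replace (a * (/ D * / c) * (D * c)) with a by (field; lra).
  replace (b * / D * (D * c)) with (b * c) by (field; lra). auto.
Qed.

Lemma pow_ge_r3 r q : 1 <= r -> (3 <= q)%nat -> r ^ 3 <= r ^ q.
Proof. intros. apply Rle_pow; auto. Qed.

Lemma A_dec q b t1 t2 : 0 <= b <= 2 -> (3 <= q)%nat -> 0 < t1 <= t2 -> A q b t2 <= A q b t1.
Proof.
  intros Hb Hq Ht.
  set (r := t2 / t1).
  assert (Hr : 1 <= r). { unfold r. apply Rmult_le_reg_r with t1; [lra|]. field_simplify; lra. }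
  replace t2 with (t1 * r) by (unfold r; field; lra).
  rewrite A_scale by lra. unfold A.
  apply div_helper. apply pow_lt; lra. apply pow_lt; lra.
  pose proof (Rpower_le_sq r b Hr (proj2 Hb)).
  pose proof (pow_ge_r3 r q Hr Hq).
  pose proof (Rpower_pos (2 * t1) b).
  assert (r ^ 2 <= r ^ 3) by (apply Rle_pow; auto).
  nra.
Qed.

Lemma A_bound q b t : 0 <= b <= 2 -> (3 <= q)%nat -> 1 <= t -> A q b t <= 4 / t.
Proof.
  intros Hb Hq Ht. unfold A.
  pose proof (Rpower_le_sq (2 * t) b ltac:(lra) (proj2 Hb)).
  pose proof (pow_ge_r3 t q Ht Hq).
  assert (0 < t ^ q) by (apply pow_lt; lra).
  apply Rmult_le_reg_r with (t ^ q); auto.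
  replace (Rpower (2 * t) b / t ^ q * t ^ q) with (Rpower (2 * t) b) by (field; lra).
  apply Rle_trans with ((2 * t) ^ 2); auto.
  apply Rle_trans with (4 / t * t ^ 3).
  - right. simpl. field. lra.
  - apply Rmult_le_compat_l; auto. apply Rle_mult_inv_pos; lra.
Qed.

Lemma lim_inv_n1 : is_lim_seq (fun n => / (INR n + 1)) 0.
Proof.
  replace (Finite 0) with (Rbar_inv p_infty) by reflexivity.
  apply is_lim_seq_inv; [|discriminate].
  apply is_lim_seq_ext with (fun n => INR (S n)). intros; apply S_INR.
  apply (is_lim_seq_incr_1 INR p_infty). apply is_lim_seq_INR.
Qed.

Lemma A_lim q b w : 0 <= b <= 2 -> (3 <= q)%nat -> (forall n, INR n + 1 <= w n) ->
  is_lim_seq (fun n => A q b (w n)) 0.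
Proof.
  intros Hb Hq Hw.
  apply is_lim_seq_le_le with (fun _ => 0) (fun n => 4 * / (INR n + 1)).
  - intros n. pose proof (pos_INR n). pose proof (Hw n). split.
    + apply A_nonneg; lra.
    + eapply Rle_trans. apply A_bound; auto; lra.
      unfold Rdiv. apply Rmult_le_compat_l; [lra|]. apply Rinv_le_contravar; lra.
  - apply is_lim_seq_const.
  - replace (Finite 0) with (Rbar_mult 4 0) by (simpl; f_equal; ring).
    apply is_lim_seq_scal_l. apply lim_inv_n1.
Qed.

Lemma E_ge3 t a : 1 <= a -> PI / 2 <= t -> 3 <= Rpower (2 * t) a.
Proof.
  intros Ha Ht. pose proof PI_gt3.
  apply Rle_trans with (Rpower (2 * t) 1).
  - rewrite Rpower_1; lra.
  - apply Rle_Rpower; lra.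
Qed.

Lemma h_dec q a t1 t2 : 1 < a < 2 -> (3 <= q)%nat -> PI / 2 <= t1 <= t2 ->
  A q a t2 - A q 0 t2 <= A q a t1 - A q 0 t1.
Proof.
  intros Ha Hq Ht. pose proof PI_gt3.
  set (r := t2 / t1).
  assert (Hr : 1 <= r). { unfold r. apply Rmult_le_reg_r with t1; [lra|]. field_simplify; lra. }
  replace t2 with (t1 * r) by (unfold r; field; lra).
  rewrite A_scale by lra. rewrite !A_zero by nra. unfold A.
  pose proof (E_ge3 t1 a ltac:(lra) ltac:(lra)).
  set (E1 := Rpower (2 * t1) a) in *.
  assert (0 < t1 ^ q) by (apply pow_lt; lra).
  assert (0 < r ^ q) by (apply pow_lt; lra).
  replace (E1 * Rpower r a / (t1 ^ q * r ^ q) - 1 / (t1 * r) ^ q)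
    with ((E1 * Rpower r a - 1) / (t1 ^ q * r ^ q)) by (rewrite Rpow_mult_distr; field; lra).
  replace (E1 / t1 ^ q - 1 / t1 ^ q) with ((E1 - 1) / t1 ^ q) by (field; lra).
  apply div_helper; auto.
  pose proof (Rpower_le_sq r a Hr ltac:(lra)).
  pose proof (pow_ge_r3 r q Hr Hq).
  assert (E1 * r ^ 2 - 1 <= (E1 - 1) * r ^ 3).
  { simpl. assert (0 <= (r - 1) * (E1 * r * r - r * r - r - 1)).
    { apply Rmult_le_pos; nra. } nra. }
  nra.
Qed.

Lemma h_key q a x : 1 < a < 2 -> (3 <= q)%nat -> 0 < x <= PI / 2 -> 3 / 2 <= Rpower (2 * x) a ->
  A q a (2 * PI - x) - A q 0 (2 * PI - x) <= A q a x - A q 0 x.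
Proof.
  intros Ha Hq Hx HE. pose proof PI_gt3.
  pose proof (A_nonneg q 0 (2 * PI - x) ltac:(lra)).
  set (r := (2 * PI - x) / x).
  assert (Hr : 3 <= r). { unfold r. apply Rmult_le_reg_r with x; [lra|]. field_simplify; lra. }
  replace (2 * PI - x) with (x * r) in * by (unfold r; field; lra).
  apply Rle_trans with (A q a (x * r)); [lra|].
  rewrite A_scale by lra. rewrite A_zero by lra. unfold A.
  set (E1 := Rpower (2 * x) a) in *.
  assert (0 < x ^ q) by (apply pow_lt; lra).
  replace (E1 / x ^ q - 1 / x ^ q) with ((E1 - 1) / x ^ q) by (field; lra).
  apply div_helper; auto. apply pow_lt; lra.
  pose proof (Rpower_le_sq r a ltac:(lra) ltac:(lra)).
  pose proof (pow_ge_r3 r q ltac:(lra) Hq).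
  pose proof (Rpower_pos (2 * x) a).
  assert (E1 * Rpower r a <= E1 * r ^ 2) by (apply Rmult_le_compat_l; lra).
  assert (E1 * r ^ 2 <= (E1 - 1) * r ^ 3).
  { simpl. assert (0 <= r * r) by nra. assert (0 <= (E1 - 1) * r - E1) by nra.
    assert (0 <= r * r * ((E1 - 1) * r - E1)) by (apply Rmult_le_pos; lra). nra. }
  assert ((E1 - 1) * r ^ 3 <= (E1 - 1) * r ^ q) by (apply Rmult_le_compat_l; lra).
  lra.
Qed.

Definition u q b x n := A q b (x + INR n * PI) + A q b ((INR n + 1) * PI - x).

Lemma u_dec q b x : 0 <= b <= 2 -> (3 <= q)%nat -> 0 < x <= PI / 2 -> Un_decreasing (u q b x).
Proof.
  intros Hb Hq Hx n. pose proof PI_gt3. pose proof (pos_INR n). unfold u. rewrite S_INR.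
  pose proof (A_dec q b (x + INR n * PI) (x + (INR n + 1) * PI) Hb Hq ltac:(nra)).
  pose proof (A_dec q b ((INR n + 1) * PI - x) ((INR n + 1 + 1) * PI - x) Hb Hq ltac:(nra)).
  lra.
Qed.

Lemma u_lim q b x : 0 <= b <= 2 -> (3 <= q)%nat -> 0 < x <= PI / 2 -> Un_cv (u q b x) 0.
Proof.
  intros Hb Hq Hx. pose proof PI_gt3. apply is_lim_seq_Reals.
  apply is_lim_seq_incr_1. unfold u.
  replace (Finite 0) with (Finite (0 + 0)) by (f_equal; ring).
  apply is_lim_seq_plus'.
  - apply A_lim; auto. intros n. pose proof (pos_INR n). rewrite S_INR. nra.
  - apply A_lim; auto. intros n. pose proof (pos_INR n). rewrite S_INR. nra.
Qed.

Lemma b_dec q a x : 1 < a < 2 -> (3 <= q)%nat -> 0 < x <= PI / 2 -> 3 / 2 <= Rpower (2 * x) a ->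
  Un_decreasing (fun n => u q a x n - u q 0 x n).
Proof.
  intros Ha Hq Hx HE n. pose proof PI_gt3. unfold u.
  destruct n as [|m].
  - replace (INR 1) with 1 by reflexivity. replace (INR 0) with 0 by reflexivity.
    replace (x + 1 * PI) with (x + PI) by ring. replace (x + 0 * PI) with x by ring.
    replace ((0 + 1) * PI - x) with (PI - x) by ring.
    replace ((1 + 1) * PI - x) with (2 * PI - x) by ring.
    pose proof (h_dec q a (PI - x) (x + PI) Ha Hq ltac:(lra)).
    pose proof (h_key q a x Ha Hq Hx HE).
    lra.
  - pose proof (pos_INR m). rewrite !S_INR.
    pose proof (h_dec q a (x + (INR m + 1) * PI) (x + (INR m + 1 + 1) * PI) Ha Hq ltac:(nra)).
    pose proof (h_dec q a ((INR m + 1 + 1) * PI - x) ((INR m + 1 + 1 + 1) * PI - x) Ha Hq ltac:(nra)).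
    lra.
Qed.

Lemma series_b p b th l : 0 <= b <= 2 -> (2 <= p)%nat -> (-1) ^ (p + 1) = -1 -> 0 < th <= PI ->
  Un_cv (fun N => sum_f_R0 (tg_alt (u (p + 1) b (th / 2))) N) l ->
  is_series (fun n => fterm p b th (Z.of_nat n) + fterm p b th (- (Z.of_nat n + 1))%Z)
    ((sin (th / 2)) ^ (p + 1) * l).
Proof.
  intros Hb Hp Hq Hth Hl. pose proof PI_gt3.
  apply is_series_ext with (fun n => (sin (th / 2)) ^ (p + 1) * tg_alt (u (p + 1) b (th / 2)) n).
  - intros n. pose proof (pos_INR n).
    assert (0 < (INR n + 1) * PI - th / 2) by nra. assert (0 < th / 2 + INR n * PI) by nra.
    rewrite fterm_pos, fterm_neg; auto. unfold tg_alt, u. match goal with |- ?a = ?b => change (@eq R a b) end. ring.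
  - pose proof (is_series_scal_l (K:=R_AbsRing) (V:=R_NormedModule) ((sin (th / 2)) ^ (p + 1)) _ _
      (proj2 (is_series_Reals _ _) Hl)) as Hs.
    exact Hs.
Qed.

Lemma lim_abs (v z : nat -> R) : is_lim_seq v 0 -> (forall n, Rabs (z n) <= v n) -> is_lim_seq z 0.
Proof.
  intros Hv Hz. apply is_lim_seq_le_le with (fun n => - v n) v; auto.
  - intros n. pose proof (Hz n). pose proof (Rle_abs (z n)). pose proof (Rle_abs (- z n)).
    rewrite Rabs_Ropp in *. lra.
  - pose proof (proj1 (is_lim_seq_opp v 0) Hv) as H'. simpl in H'. rewrite Ropp_0 in H'. exact H'.
Qed.

Lemma lims p b th : 0 <= b <= 2 -> (2 <= p)%nat -> (-1) ^ (p + 1) = -1 -> 0 < th <= PI ->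
  is_lim_seq (fun n => fterm p b th (Z.of_nat n + 1)%Z) 0 /\
  is_lim_seq (fun n => fterm p b th (- (Z.of_nat n + 1))%Z) 0.
Proof.
  intros Hb Hp Hq Hth. pose proof PI_gt3. pose proof PI_4.
  assert (HS : 0 <= sin (th / 2) ^ (p + 1)) by (apply pow_le; apply sin_ge_0; lra).
  assert (Hq3 : (3 <= p + 1)%nat) by lia.
  split.
  - apply lim_abs with (fun n => sin (th / 2) ^ (p + 1) * A (p + 1) b (th / 2 + INR (S n) * PI)).
    + replace (Finite 0) with (Rbar_mult (sin (th / 2) ^ (p + 1)) 0) by (simpl; f_equal; ring).
      apply is_lim_seq_scal_l. apply A_lim; auto. intros n. pose proof (pos_INR n). rewrite S_INR. nra.
    + intros n. replace (Z.of_nat n + 1)%Z with (Z.of_nat (S n)) by lia.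
      pose proof (pos_INR (S n)).
      rewrite fterm_pos by (auto; nra). rewrite Rabs_mult, pow_1_abs, Rmult_1_l.
      rewrite Rabs_pos_eq. lra. apply Rmult_le_pos; auto. apply A_nonneg. nra.
  - apply lim_abs with (fun n => sin (th / 2) ^ (p + 1) * A (p + 1) b ((INR n + 1) * PI - th / 2)).
    + replace (Finite 0) with (Rbar_mult (sin (th / 2) ^ (p + 1)) 0) by (simpl; f_equal; ring).
      apply is_lim_seq_scal_l. apply A_lim; auto. intros n. pose proof (pos_INR n). nra.
    + intros n. pose proof (pos_INR n).
      rewrite fterm_neg by (auto; nra). rewrite Rabs_mult, pow_1_abs, Rmult_1_l.
      rewrite Rabs_pos_eq. lra. apply Rmult_le_pos; auto. apply A_nonneg. nra.
Qed.

Lemma transfer (F : Z -> R) l :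
  is_series (fun n => F (Z.of_nat n) + F (- (Z.of_nat n + 1))%Z) l ->
  is_lim_seq (fun n => F (Z.of_nat n + 1)%Z) 0 ->
  is_lim_seq (fun n => F (- (Z.of_nat n + 1))%Z) 0 ->
  is_series (fun n => F (- Z.of_nat n)%Z + F (Z.of_nat n + 1)%Z) l.
Proof.
  intros HP H1 H2.
  assert (E : forall N, sum_n (fun n => F (- Z.of_nat n)%Z + F (Z.of_nat n + 1)%Z) N =
     sum_n (fun n => F (Z.of_nat n) + F (- (Z.of_nat n + 1))%Z) N
     + (F (Z.of_nat N + 1)%Z - F (- (Z.of_nat N + 1))%Z)).
  { induction N.
    - rewrite !sum_O. simpl. ring.
    - rewrite !sum_Sn, IHN. rewrite Nat2Z.inj_succ. unfold Z.succ, plus. simpl. ring. }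

  unfold is_series. change (is_lim_seq (sum_n (fun n => F (- Z.of_nat n)%Z + F (Z.of_nat n + 1)%Z)) l).
  apply is_lim_seq_ext with (fun N => sum_n (fun n => F (Z.of_nat n) + F (- (Z.of_nat n + 1))%Z) N
     + (F (Z.of_nat N + 1)%Z - F (- (Z.of_nat N + 1))%Z)).
  { intros; symmetry; apply E. }
  replace (Finite l) with (Finite (l + (0 - 0))) by (f_equal; ring).
  apply is_lim_seq_plus'. exact HP.
  apply is_lim_seq_minus'; auto.
Qed.

Lemma pos_ineq p a th : 1 < a < 2 -> (2 <= p)%nat -> (-1) ^ (p + 1) = -1 -> 0 < th <= PI ->
  3 / 2 <= Rpower th a -> fpb p 0 th <= fpb p a th.
Proof.
  intros Ha Hp Hq Hth HE. pose proof PI_gt3.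
  assert (Hq3 : (3 <= p + 1)%nat) by lia.
  assert (Hx : 0 < th / 2 <= PI / 2) by lra.
  assert (Hb0 : 0 <= 0 <= 2) by lra. assert (Hba : 0 <= a <= 2) by lra.
  destruct (alternated_series _ (u_dec _ _ _ Hba Hq3 Hx) (u_lim _ _ _ Hba Hq3 Hx)) as [la Hla].
  destruct (alternated_series _ (u_dec _ _ _ Hb0 Hq3 Hx) (u_lim _ _ _ Hb0 Hq3 Hx)) as [l0 Hl0].
  pose proof (series_b p a th la Hba Hp Hq Hth Hla) as Hsa.
  pose proof (series_b p 0 th l0 Hb0 Hp Hq Hth Hl0) as Hs0.
  unfold fpb. rewrite (is_series_unique _ _ Hsa), (is_series_unique _ _ Hs0).
  apply Rmult_le_compat_l. { apply pow_le; apply sin_ge_0; lra. }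
  assert (HE' : 3 / 2 <= Rpower (2 * (th / 2)) a) by (replace (2 * (th / 2)) with th by field; auto).
  set (bb := fun n => u (p + 1) a (th / 2) n - u (p + 1) 0 (th / 2) n).
  assert (Hd : Un_decreasing bb) by (apply b_dec; auto).
  assert (Hc : Un_cv bb 0).
  { replace 0 with (0 - 0) by ring. apply CV_minus; apply u_lim; auto. }
  assert (Hcs : Un_cv (fun N => sum_f_R0 (tg_alt bb) N) (la - l0)).
  { apply is_lim_seq_Reals.
    apply is_lim_seq_ext with (fun N => sum_f_R0 (tg_alt (u (p + 1) a (th / 2))) N
                                        - sum_f_R0 (tg_alt (u (p + 1) 0 (th / 2))) N).
    - intros N. rewrite <- minus_sum. apply sum_eq. intros i _. unfold tg_alt, bb. ring.
    - apply is_lim_seq_minus'; apply is_lim_seq_Reals; auto. }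
  pose proof (alternated_series_ineq bb (la - l0) 0 Hd Hc Hcs) as [Hi _].
  change (sum_f_R0 (tg_alt bb) (S (2 * 0))) with (tg_alt bb 0 + tg_alt bb 1) in Hi.
  unfold tg_alt in Hi. rewrite pow_O, pow_1 in Hi.
  pose proof (Hd 0%nat). lra.
Qed.

Lemma fterm_sym p b th l : fterm p b (- th) l = fterm p b th (- l).
Proof.
  unfold fterm. rewrite opp_IZR.
  replace (- th + 2 * IZR l * PI) with (- (th + 2 * - IZR l * PI)) by ring.
  rewrite abspow_opp.
  replace (- th / 2 + IZR l * PI) with (- (th / 2 + - IZR l * PI)) by field.
  rewrite sinc_opp. reflexivity.
Qed.

Lemma neg_eq p b th : 0 <= b <= 2 -> (2 <= p)%nat -> (-1) ^ (p + 1) = -1 -> 0 < th <= PI ->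
  fpb p b (- th) = fpb p b th.
Proof.
  intros Hb Hp Hq Hth. pose proof PI_gt3.
  assert (Hq3 : (3 <= p + 1)%nat) by lia.
  assert (Hx : 0 < th / 2 <= PI / 2) by lra.
  destruct (alternated_series _ (u_dec _ _ _ Hb Hq3 Hx) (u_lim _ _ _ Hb Hq3 Hx)) as [l Hl].
  pose proof (series_b p b th l Hb Hp Hq Hth Hl) as Hs.
  destruct (lims p b th Hb Hp Hq Hth) as [L1 L2].
  pose proof (transfer (fterm p b th) _ Hs L1 L2) as Ht.
  unfold fpb at 2. rewrite (is_series_unique _ _ Hs).
  unfold fpb. apply is_series_unique.
  eapply is_series_ext; [|exact Ht]. intros n. simpl.
  rewrite !fterm_sym. rewrite Z.opp_involutive. reflexivity.
Qed.

Theorem proposition5p5 (alpha : R) (p : nat) (theta : R) :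
  1 < alpha < 2 ->
  (2 <= p)%nat -> Nat.Even p ->
  Rpower (PI ^ 4 / 48) (/ alpha) <= Rabs theta <= PI ->
  fpb p 0 theta <= fpb p alpha theta.
Proof.
  intros Ha Hp Hev Hth. pose proof PI_gt3.
  assert (Hq : (-1) ^ (p + 1) = -1).
  { destruct Hev as [k Hk]. subst p. rewrite pow_add, pow_mult.
    replace ((-1) ^ 2) with 1 by (simpl; ring). rewrite pow1. simpl; ring. }
  pose proof (Rpower_pos (PI ^ 4 / 48) (/ alpha)) as Hpos.
  assert (HE : forall t, Rpower (PI ^ 4 / 48) (/ alpha) <= t -> 3 / 2 <= Rpower t alpha).
  { intros t Ht.
    assert (Hl : Rpower (Rpower (PI ^ 4 / 48) (/ alpha)) alpha <= Rpower t alpha)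
      by (apply Rle_Rpower_l; lra).
    rewrite Rpower_mult, Rinv_l, Rpower_1 in Hl by (try lra; assert (0 < PI ^ 4) by (apply pow_lt; lra); lra).
    assert (81 <= PI ^ 4) by (simpl; assert (9 <= PI * PI) by nra; nra). lra. }
  destruct (Rle_lt_dec 0 theta) as [Hge|Hlt].
  - rewrite Rabs_pos_eq in Hth by auto.
    apply pos_ineq; auto; try lra. apply HE; lra.
  - rewrite Rabs_left in Hth by auto.
    replace theta with (- (- theta)) by ring.
    assert (Ht' : 0 < - theta <= PI) by lra.
    rewrite (neg_eq p 0 (- theta)) by (auto; lra).
    rewrite (neg_eq p alpha (- theta)) by (auto; lra).
    apply pos_ineq; auto. apply HE; lra.
Qed.
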